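(* For all real numbers $w,z$ there exists an infinitely differentiable strictly increasing bijection $t:\mathbb{R}\to\mathbb{R}$ such that $t(w)=z$ and $t(x)\sim_F^* x$ for every $x<w$.
   Context: Let $h:\mathbb{R}\to\mathbb{R}$ be $h(x)=0$ for $x\le 0$ and $h(x)=e^{-1/x}$ for $x>0$, and let $s:[0,1]\to[0,1]$ be $s(x)=\frac{h(x)}{h(x)+h(1-x)}$. For points $A=(p_1,q_1)$, $B=(p_2,q_2)$ in $\mathbb{R}^2$ with $p_1<p_2$ and $q_1<q_2$, define $s_{AB}:[p_1,p_2]\to[q_1,q_2]$ by $s_{AB}(x)=(q_2-q_1)\, s\!\left(\frac{x-p_1}{p_2-p_1}\right)+q_1$. A rational pair is a point of $\mathbb{R}^2$ with both coordinates rational. Let $F=\{s_{AB}: A,B \text{ rational pairs}, A=(p_1,q_1), B=(p_2,q_2), p_1<p_2, q_1<q_2\}$. For $x,y\in\mathbb{R}$, write $x\sim_F y$ if there is $g\in F$ with $g(x)=y$ or $g^{-1}(x)=y$. Write $x\sim_F^* y$ if there is a finite sequence $x=x_1\sim_F x_2\sim_F\cdots\sim_F x_n=y$ with $n\ge 1$. *)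

(* Defs.v *)
From Stdlib Require Import Reals Lra ZArith.
Open Scope R_scope.

Definition h (x : R) : R :=
  if Rle_dec x 0 then 0 else exp (- (1 / x)).

Definition s (x : R) : R := h x / (h x + h (1 - x)).

(* s_AB for A = (p1,q1), B = (p2,q2), intended on [p1,p2] *)
Definition sAB (p1 q1 p2 q2 : R) (x : R) : R :=
  (q2 - q1) * s ((x - p1) / (p2 - p1)) + q1.

Definition is_rational (r : R) : Prop :=
  exists (a b : Z), b <> 0%Z /\ r = IZR a / IZR b.

(* x ~_F y : there are rational pairs A=(p1,q1), B=(p2,q2) with p1<p2, q1<q2
   such that g = s_AB : [p1,p2] -> [q1,q2] satisfies g(x) = y or g^{-1}(x) = y. *)
Definition simF (x y : R) : Prop :=
  exists p1 q1 p2 q2 : R,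
    is_rational p1 /\ is_rational q1 /\ is_rational p2 /\ is_rational q2 /\
    p1 < p2 /\ q1 < q2 /\
    ( (p1 <= x <= p2 /\ sAB p1 q1 p2 q2 x = y)
    \/ (p1 <= y <= p2 /\ sAB p1 q1 p2 q2 y = x) ).

Inductive simF_star : R -> R -> Prop :=
  | simF_star_refl : forall x, simF_star x x
  | simF_star_step : forall x y z, simF x y -> simF_star y z -> simF_star x z.

Definition smooth (f : R -> R) : Prop :=
  exists D : nat -> R -> R,
    D 0%nat = f /\ forall (n : nat) (x : R), derivable_pt_lim (D n) x (D (S n) x).

(* Main.v *)
Require Import Defs.
From Stdlib Require Import Reals Lra Lia ZArith ClassicalEpsilon.
From Coquelicot Require Import Coquelicot.
Open Scope R_scope.

Fixpoint Cn (n : nat) (f : R -> R) : Prop :=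
  match n with
  | O => True
  | S m => (forall x, ex_derive f x) /\ Cn m (Derive f)
  end.

Definition Sm (f : R -> R) : Prop := forall n, Cn n f.

Lemma exd_plus : forall f g x, ex_derive f x -> ex_derive g x -> ex_derive (fun y => f y + g y) x.
Proof. intros f g x A B. exact (ex_derive_plus f g x A B). Qed.
Lemma isd_id : forall x, is_derive (fun t:R => t) x 1.
Proof. intro x. exact (is_derive_id x). Qed.
Lemma Derive_idf : forall x, Derive (fun t:R => t) x = 1.
Proof. intro x. apply is_derive_unique, isd_id. Qed.
Lemma exd_affine : forall a b x, ex_derive (fun t => a * t + b) x.
Proof. intros. apply exd_plus. apply ex_derive_scal, ex_derive_id. apply ex_derive_const. Qed.

Lemma Derive_affine : forall a b x, Derive (fun t => a * t + b) x = a.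
Proof. intros. rewrite Derive_plus. rewrite Derive_const, Derive_scal, Derive_idf. ring.
  apply ex_derive_scal, ex_derive_id. apply ex_derive_const. Qed.

Lemma Cn_ext : forall n f g, (forall x, f x = g x) -> Cn n f -> Cn n g.
Proof.
  induction n; simpl; intros f g E H; auto.
  destruct H as [H1 H2]; split.
  - intro x. apply ex_derive_ext with f; auto.
  - apply IHn with (Derive f); auto. intro x. apply Derive_ext; auto.
Qed.

Lemma Cn_weak : forall n f, Cn (S n) f -> Cn n f.
Proof.
  induction n; simpl; intros f H; auto.
  destruct H as [H1 H2]; split; auto.
Qed.

Lemma Cn_le : forall n m f, (m <= n)%nat -> Cn n f -> Cn m f.
Proof.
  intros n m f Hle; induction Hle; auto.
  intro H; apply IHHle, Cn_weak; auto.
Qed.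

Lemma Cn_const : forall n c, Cn n (fun _ => c).
Proof.
  induction n; simpl; intros; auto. split.
  - intro; apply ex_derive_const.
  - apply Cn_ext with (fun _ => 0); auto. intro x; rewrite Derive_const; auto.
Qed.

Lemma Cn_plus : forall n f g, Cn n f -> Cn n g -> Cn n (fun x => f x + g x).
Proof.
  induction n; simpl; intros f g Hf Hg; auto.
  destruct Hf as [F1 F2], Hg as [G1 G2]; split.
  - intro x; apply exd_plus; auto.
  - apply Cn_ext with (fun x => Derive f x + Derive g x); auto.
    intro x; rewrite Derive_plus; auto.
Qed.

Lemma Cn_mult : forall n f g, Cn n f -> Cn n g -> Cn n (fun x => f x * g x).
Proof.
  induction n; simpl; intros f g Hf Hg; auto.
  assert (Hf' := Cn_weak _ _ Hf). assert (Hg' := Cn_weak _ _ Hg).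
  destruct Hf as [F1 F2], Hg as [G1 G2]; split.
  - intro x; apply ex_derive_mult; auto.
  - apply Cn_ext with (fun x => Derive f x * g x + f x * Derive g x); auto.
    + intro x; rewrite Derive_mult; auto.
    + apply Cn_plus; apply IHn; auto.
Qed.

Lemma Cn_inv : forall n f, (forall x, f x <> 0) -> Cn n f -> Cn n (fun x => / f x).
Proof.
  induction n; simpl; intros f Hnz Hf; auto.
  assert (Hf' := Cn_weak _ _ Hf).
  destruct Hf as [F1 F2]; split.
  - intro x; apply ex_derive_inv; auto.
  - apply Cn_ext with (fun x => (- Derive f x) * ((/ f x) * (/ f x))).
    + intro x; rewrite Derive_inv; auto. field. auto.
    + apply Cn_mult. apply Cn_ext with (fun x => (-1) * Derive f x).
      intro; ring. apply Cn_mult; auto. apply Cn_const.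
      apply Cn_mult; apply IHn; auto.
Qed.

Lemma Cn_affine : forall n f a b, Cn n f -> Cn n (fun x => f (a * x + b)).
Proof.
  induction n; simpl; intros f a b Hf; auto.
  destruct Hf as [F1 F2]; split.
  - intro x. apply ex_derive_comp; auto. apply exd_affine.
  - apply Cn_ext with (fun x => a * Derive f (a * x + b)).
    + intro x. symmetry. rewrite (Derive_comp f (fun t => a*t+b) x).
      * rewrite Derive_affine. ring.
      * auto.
      * apply exd_affine.
    + apply Cn_mult. apply Cn_const. apply IHn; auto.
Qed.

Lemma Sm_ext : forall f g, (forall x, f x = g x) -> Sm f -> Sm g.
Proof. intros f g E H n; apply Cn_ext with f; auto. Qed.
Lemma Sm_const : forall c, Sm (fun _ => c).
Proof. intros c n; apply Cn_const. Qed.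
Lemma Sm_plus : forall f g, Sm f -> Sm g -> Sm (fun x => f x + g x).
Proof. intros f g A B n; apply Cn_plus; auto. Qed.
Lemma Sm_mult : forall f g, Sm f -> Sm g -> Sm (fun x => f x * g x).
Proof. intros f g A B n; apply Cn_mult; auto. Qed.
Lemma Sm_inv : forall f, (forall x, f x <> 0) -> Sm f -> Sm (fun x => / f x).
Proof. intros f A B n; apply Cn_inv; auto. Qed.
Lemma Sm_affine : forall f a b, Sm f -> Sm (fun x => f (a * x + b)).
Proof. intros f a b A n; apply Cn_affine; auto. Qed.
Lemma Sm_id : Sm (fun x => x).
Proof.
  intros [|n]; simpl; auto. split. intro; apply ex_derive_id.
  apply Cn_ext with (fun _ => 1). intro x; symmetry; apply Derive_idf.
  apply Cn_const.
Qed.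

Lemma Sm_ex_derive_n : forall f, Sm f -> forall n x, ex_derive (Derive_n f n) x.
Proof.
  intros f H n; revert f H; induction n; intros f H x.
  - simpl. destruct (H 1%nat) as [A _]; auto.
  - assert (Sm (Derive f)). { intro m. destruct (H (S m)) as [_ B]; auto. }
    apply ex_derive_ext with (Derive_n (Derive f) n).
    + intro t. change (Derive f) with (Derive_n f 1). rewrite Derive_n_comp.
      replace (n + 1)%nat with (S n) by lia. reflexivity.
    + apply IHn; auto.
Qed.
Lemma pinv_der : forall k x, x <> 0 -> is_derive (fun y => (/y)^k) x (- INR k * (/x)^(S k)).
Proof.
  intros k x Hx. induction k.
  - simpl. replace (- 0 * (/x * 1)) with 0 by ring. apply (is_derive_const 1 x).
  - assert (H2 : is_derive (fun y => /y) x (- (/x)^2)).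
    { auto_derive; auto. field. auto. }
    apply is_derive_ext with (fun y => (/y) * (/y)^k).
    { intro; simpl; ring. }
    eapply is_derive_ext. intro; reflexivity.
    replace (- INR (S k) * (/x)^(S (S k))) with ((- (/x)^2) * (/x)^k + (/x) * (- INR k * (/x)^(S k))).
    2:{ rewrite S_INR. simpl. ring. }
    apply (is_derive_mult (fun y => /y) (fun y => (/y)^k)); auto.
    intros; apply Rmult_comm.
Qed.
Lemma exp_ge_pow : forall u n, 0 <= u -> u^(S n) / INR (fact (S n)) <= exp u.
Proof.
  intros u n Hu. eapply Rle_trans; [| apply (exp_ge_taylor u (S n) Hu)].
  change (sum_f_R0 (fun k : nat => u ^ k / INR (fact k)) (S n)) with
    (sum_f_R0 (fun k : nat => u ^ k / INR (fact k)) n + u^(S n) / INR (fact (S n))).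
  assert (0 <= sum_f_R0 (fun k => u ^ k / INR (fact k)) n).
  { apply cond_pos_sum. intro k. apply Rmult_le_pos. apply pow_le; auto.
    apply Rlt_le, Rinv_0_lt_compat, INR_fact_lt_0. }
  lra.
Qed.

Lemma Ebound : forall k y, 0 < y -> (/y)^k * exp(-(1/y)) <= INR (fact (S k)) * y.
Proof.
  intros k y Hy.
  set (u := /y).
  assert (Hu : 0 < u) by (apply Rinv_0_lt_compat; auto).
  assert (HF := INR_fact_lt_0 (S k)).
  set (F := INR (fact (S k))) in *.
  assert (He := exp_ge_pow u k (Rlt_le _ _ Hu)).
  replace (-(1/y)) with (- u) by (unfold u; field; lra).
  rewrite exp_Ropp.
  assert (Hp : 0 < u ^ S k / F).
  { apply Rdiv_lt_0_compat; auto. apply pow_lt; auto. }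
  apply Rle_trans with (u^k * / (u ^ S k / F)).
  { apply Rmult_le_compat_l. apply pow_le; lra. apply Rinv_le_contravar; auto. }
  replace y with (/u) by (unfold u; field; lra).
  apply Req_le. simpl. field. repeat split; try lra; apply pow_nonzero; lra.
Qed.
Lemma loc_int : forall (P : R -> Prop) a b x, a < x < b -> (forall y, a < y < b -> P y) -> locally x P.
Proof.
  intros P a b x Hx HP.
  assert (Hp : 0 < Rmin (x - a) (b - x)) by (apply Rmin_pos; lra).
  exists (mkposreal _ Hp). intros y Hy.
  unfold ball in Hy; simpl in Hy; unfold AbsRing_ball, abs, minus, plus, opp in Hy; simpl in Hy.
  apply HP. apply Rabs_def2 in Hy. destruct Hy.
  assert (Rmin (x - a) (b - x) <= x - a) by apply Rmin_l.
  assert (Rmin (x - a) (b - x) <= b - x) by apply Rmin_r. lra.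
Qed.
Definition E (k : nat) (x : R) : R := if Rle_dec x 0 then 0 else (/x)^k * exp(-(1/x)).

Lemma E_neg : forall k x, x <= 0 -> E k x = 0.
Proof. intros k x H; unfold E; destruct (Rle_dec x 0); [auto | contradiction]. Qed.
Lemma E_pos : forall k x, 0 < x -> E k x = (/x)^k * exp(-(1/x)).
Proof. intros k x H; unfold E; destruct (Rle_dec x 0); [lra | auto]. Qed.

Lemma E_der : forall k x, is_derive (E k) x (- INR k * E (S k) x + E (S (S k)) x).
Proof.
  intros k x.
  destruct (Rtotal_order x 0) as [Hx | [Hx | Hx]].
  - rewrite !E_neg by lra.
    apply is_derive_ext_loc with (fun _ => 0).
    + apply loc_int with (x - 1) 0. lra. intros y Hy. rewrite E_neg by lra. auto.
    + replace (- INR k * 0 + 0) with 0 by ring. apply (is_derive_const 0 x).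
  - subst x. rewrite !E_neg by lra. replace (- INR k * 0 + 0) with 0 by ring.
    apply is_derive_Reals. intros eps Heps.
    assert (HF := INR_fact_lt_0 (S (S k))).
    assert (Hd : 0 < eps / INR (fact (S (S k)))) by (apply Rdiv_lt_0_compat; auto).
    exists (mkposreal _ Hd). intros hh Hh0 Hh. change (Rabs hh < eps / INR (fact (S (S k)))) in Hh.
    rewrite (E_neg k 0) by lra. rewrite Rplus_0_l.
    destruct (Rle_dec hh 0).
    + rewrite E_neg by auto. replace ((0 - 0) / hh - 0) with 0 by (field; auto).
      rewrite Rabs_R0; auto.
    + rewrite E_pos by lra.
      replace (((/ hh) ^ k * exp (- (1 / hh)) - 0) / hh - 0) with ((/hh)^(S k) * exp (- (1/hh))) by (simpl; field; lra).
      assert (B := Ebound (S k) hh ltac:(lra)).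
      assert (0 <= (/hh)^(S k) * exp (- (1/hh))).
      { apply Rmult_le_pos. apply pow_le. apply Rlt_le, Rinv_0_lt_compat; lra. apply Rlt_le, exp_pos. }
      rewrite Rabs_right by lra.
      apply Rabs_def2 in Hh. destruct Hh as [Hh _].
      apply Rle_lt_trans with (INR (fact (S (S k))) * hh); auto.
      apply Rmult_lt_compat_l with (r := INR (fact (S (S k)))) in Hh; auto.
      replace (INR (fact (S (S k))) * (eps / INR (fact (S (S k))))) with eps in Hh by (field; lra).
      lra.
  - rewrite !E_pos by lra.
    apply is_derive_ext_loc with (fun y => (/y)^k * exp(-(1/y))).
    + apply loc_int with 0 (x + 1). lra. intros y Hy. rewrite E_pos by lra. auto.
    + assert (H1 := pinv_der k x ltac:(lra)).
      assert (H2 : is_derive (fun y => exp(-(1/y))) x (exp(-(1/x)) * (/x)^2)).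
      { auto_derive. lra. unfold Rdiv. field. lra. }
      replace (- INR k * ((/ x) ^ S k * exp (- (1 / x))) + (/ x) ^ S (S k) * exp (- (1 / x)))
        with ((- INR k * (/x)^(S k)) * exp (-(1/x)) + (/x)^k * (exp(-(1/x)) * (/x)^2)) by (simpl; ring).
      apply (is_derive_mult (fun y => (/y)^k) (fun y => exp (-(1/y)))); auto.
      intros; apply Rmult_comm.
Qed.

Lemma E_Sm_aux : forall n k, Cn n (E k).
Proof.
  induction n; simpl; intros k; auto. split.
  - intro x. exists (- INR k * E (S k) x + E (S (S k)) x). apply E_der.
  - apply Cn_ext with (fun x => (- INR k) * E (S k) x + E (S (S k)) x).
    + intro x. symmetry. apply is_derive_unique, E_der.
    + apply Cn_plus; auto. apply Cn_mult; auto. apply Cn_const.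
Qed.

Lemma h_Sm : Sm h.
Proof.
  apply Sm_ext with (E 0). intro x. unfold E, h. destruct (Rle_dec x 0); auto. simpl; ring.
  intro n; apply E_Sm_aux.
Qed.
Lemma h_zero : forall x, x <= 0 -> h x = 0.
Proof. intros x H; unfold h; destruct (Rle_dec x 0); [auto | contradiction]. Qed.
Lemma h_posv : forall x, 0 < x -> h x = exp (- (1/x)).
Proof. intros x H; unfold h; destruct (Rle_dec x 0); [lra | auto]. Qed.
Lemma h_pos : forall x, 0 < x -> 0 < h x.
Proof. intros; rewrite h_posv; auto; apply exp_pos. Qed.
Lemma h_nonneg : forall x, 0 <= h x.
Proof. intros x. destruct (Rle_dec x 0). rewrite h_zero; auto; lra. apply Rlt_le, h_pos; lra. Qed.
Lemma h_strict : forall x y, 0 <= x -> x < y -> h x < h y.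
Proof.
  intros x y Hx Hxy. destruct (Req_dec x 0).
  - subst. rewrite h_zero by lra. apply h_pos; lra.
  - rewrite !h_posv by lra. apply exp_increasing.
    assert (1/y < 1/x). { apply Rmult_lt_reg_r with (x*y). nra. field_simplify; nra. }
    lra.
Qed.
Lemma h_mono : forall x y, x <= y -> h x <= h y.
Proof.
  intros x y H. destruct (Rle_dec x 0).
  - rewrite (h_zero x) by auto. apply h_nonneg.
  - destruct (Req_dec x y). subst; lra. apply Rlt_le, h_strict; lra.
Qed.
Lemma h_lt1 : forall x, h x < 1.
Proof.
  intro x. destruct (Rle_dec x 0). rewrite h_zero; auto; lra.
  rewrite h_posv by lra. apply Rlt_le_trans with (exp 0); [apply exp_increasing | rewrite exp_0; lra].
  assert (0 < 1/x) by (apply Rdiv_lt_0_compat; lra). lra.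
Qed.

Lemma den_pos : forall x, 0 < h x + h (1 - x).
Proof.
  intro x. destruct (Rle_dec x 0).
  - assert (0 < h (1 - x)) by (apply h_pos; lra). assert (0 <= h x) by apply h_nonneg. lra.
  - assert (0 < h x) by (apply h_pos; lra). assert (0 <= h (1-x)) by apply h_nonneg. lra.
Qed.

Lemma s_Sm : Sm s.
Proof.
  apply Sm_ext with (fun x => h x * / (h x + h (-1 * x + 1))).
  { intro x. unfold s. replace (-1 * x + 1) with (1 - x) by ring. reflexivity. }
  apply Sm_mult. apply h_Sm. apply Sm_inv.
  { intro x. replace (-1 * x + 1) with (1 - x) by ring. apply Rgt_not_eq, den_pos. }
  apply Sm_plus. apply h_Sm. apply Sm_affine, h_Sm.
Qed.

Lemma s_le0 : forall x, x <= 0 -> s x = 0.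
Proof. intros x H. unfold s. rewrite h_zero by auto. unfold Rdiv; ring. Qed.
Lemma s_ge1 : forall x, 1 <= x -> s x = 1.
Proof.
  intros x H. unfold s. rewrite (h_zero (1 - x)) by lra.
  assert (0 < h x) by (apply h_pos; lra). field. lra.
Qed.
Lemma s_range : forall x, 0 <= s x <= 1.
Proof.
  intro x. unfold s. assert (A := den_pos x). assert (B := h_nonneg x). assert (C := h_nonneg (1-x)).
  split. apply Rmult_le_pos; auto. apply Rlt_le, Rinv_0_lt_compat; auto.
  apply Rmult_le_reg_r with (h x + h (1 - x)); auto. unfold Rdiv. rewrite Rmult_assoc, Rinv_l by lra. lra.
Qed.
Lemma s_strict : forall u v, 0 <= u -> u < v -> v <= 1 -> s u < s v.
Proof.
  intros u v Hu Huv Hv. unfold s.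
  assert (A := den_pos u). assert (B := den_pos v).
  assert (H1 : h u < h v) by (apply h_strict; auto).
  assert (H2 : h (1 - v) < h (1 - u)) by (apply h_strict; lra).
  assert (H3 := h_nonneg u). assert (H4 := h_nonneg (1 - v)).
  apply Rmult_lt_reg_r with ((h u + h (1 - u)) * (h v + h (1 - v))). nra.
  field_simplify; try lra. nra.
Qed.
Lemma s_mono : forall u v, u <= v -> s u <= s v.
Proof.
  intros u v H. destruct (Rle_dec u 0).
  - rewrite (s_le0 u) by auto. apply s_range.
  - destruct (Rle_dec 1 v).
    + rewrite (s_ge1 v) by auto. apply s_range.
    + destruct (Req_dec u v). subst; lra. apply Rlt_le, s_strict; lra.
Qed.
Lemma Derive_lin : forall f a b c d x, ex_derive f (a*x+b) ->
  Derive (fun y => c * f (a*y+b) + d) x = c * a * Derive f (a*x+b).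
Proof.
  intros f a b c d x H.
  assert (Hc : ex_derive (fun y => f (a*y+b)) x) by (apply ex_derive_comp; auto; apply exd_affine).
  rewrite Derive_plus. rewrite Derive_const, Derive_scal.
  rewrite (Derive_comp f (fun t => a*t+b) x); auto. rewrite Derive_affine. ring.
  apply exd_affine. apply ex_derive_scal; auto. apply ex_derive_const.
Qed.

Lemma Derive_n_lin : forall g a b c d, Sm g -> forall n x,
  Derive_n (fun y => c * g (a*y+b) + d) (S n) x = c * a^(S n) * Derive_n g (S n) (a*x+b).
Proof.
  intros g a b c d Hg n. induction n; intro x.
  - simpl. rewrite Derive_lin. rewrite Rmult_1_r. reflexivity. apply (Sm_ex_derive_n g Hg 0).
  - change (Derive (Derive_n (fun y => c * g (a*y+b) + d) (S n)) x = c * a ^ S (S n) * Derive (Derive_n g (S n)) (a * x + b)).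
    rewrite (Derive_ext _ (fun y => (c * a^(S n)) * Derive_n g (S n) (a*y+b) + 0)).
    + rewrite Derive_lin. simpl; ring. apply Sm_ex_derive_n; auto.
    + intro; rewrite IHn; ring.
Qed.

Lemma loc_all : forall (P : R -> Prop) x, (forall y, P y) -> locally x P.
Proof. intros P x H. apply loc_int with (x-1) (x+1). lra. intros; auto. Qed.

Lemma ex_derive_n_Sm : forall f, Sm f -> forall k y, ex_derive_n f k y.
Proof. intros f H [|k] y. simpl; auto. simpl. apply Sm_ex_derive_n; auto. Qed.

Lemma Derive_n_plus_Sm : forall f g, Sm f -> Sm g -> forall n x,
  Derive_n (fun y => f y + g y) n x = Derive_n f n x + Derive_n g n x.
Proof.
  intros f g Hf Hg n x. apply Derive_n_plus; apply loc_all; intros; apply ex_derive_n_Sm; auto.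
Qed.

Lemma sAB_lin : forall p1 q1 p2 q2 x,
  sAB p1 q1 p2 q2 x = (q2 - q1) * s ((/(p2-p1)) * x + (- p1 / (p2 - p1))) + q1.
Proof. intros. unfold sAB. f_equal. f_equal. f_equal. unfold Rdiv. ring. Qed.

Lemma sAB_Sm : forall p1 q1 p2 q2, Sm (sAB p1 q1 p2 q2).
Proof.
  intros. apply Sm_ext with (fun x => (q2 - q1) * s ((/(p2-p1)) * x + (- p1 / (p2 - p1))) + q1).
  intro; symmetry; apply sAB_lin.
  apply Sm_plus. apply Sm_mult. apply Sm_const. apply Sm_affine, s_Sm. apply Sm_const.
Qed.

Lemma Derive_n_sAB : forall p1 q1 p2 q2 n x,
  Derive_n (sAB p1 q1 p2 q2) (S n) x =
  (q2 - q1) * (/(p2-p1))^(S n) * Derive_n s (S n) ((x - p1)/(p2-p1)).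
Proof.
  intros. rewrite (Derive_n_ext _ (fun x => (q2 - q1) * s ((/(p2-p1)) * x + (- p1 / (p2 - p1))) + q1)).
  rewrite Derive_n_lin by apply s_Sm. replace ((x - p1) / (p2 - p1)) with (/ (p2 - p1) * x + - p1 / (p2 - p1)) by (unfold Rdiv; ring). reflexivity.
  intro; apply sAB_lin.
Qed.

Lemma loc_ex : forall f g x, Sm g -> locally x (fun y => f y = g y) ->
  forall n, ex_derive (Derive_n f n) x.
Proof.
  intros f g x Hg Hl n.
  apply ex_derive_ext_loc with (Derive_n g n).
  - apply locally_locally in Hl. revert Hl. apply filter_imp.
    intros y Hy. symmetry. apply Derive_n_ext_loc; auto.
  - apply Sm_ex_derive_n; auto.
Qed.

Lemma Sm_cont : forall f, Sm f -> forall n x, continuity_pt (Derive_n f n) x.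
Proof.
  intros f H n x. apply derivable_continuous_pt.
  exists (Derive (Derive_n f n) x). apply is_derive_Reals. apply Derive_correct. apply Sm_ex_derive_n; auto.
Qed.

Lemma s_der_bound : forall n, exists M, forall u, Rabs (Derive_n s (S n) u) <= M.
Proof.
  intro n.
  destruct (continuity_ab_maj (fun u => Rabs (Derive_n s (S n) u)) 0 1) as [m [Hm _]].
  lra. intros c _. apply continuity_pt_comp with (f2 := Rabs). apply Sm_cont, s_Sm.
  apply Rcontinuity_abs.
  exists (Rabs (Derive_n s (S n) m)). intro u.
  destruct (Rlt_dec u 0).
  - rewrite (Derive_n_ext_loc _ (fun _ => 0)).
    + rewrite Derive_n_const. rewrite Rabs_R0. apply Rabs_pos.
    + apply loc_int with (u - 1) 0. lra. intros y Hy. apply s_le0; lra.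
  - destruct (Rlt_dec 1 u).
    + rewrite (Derive_n_ext_loc _ (fun _ => 1)).
      * rewrite Derive_n_const. rewrite Rabs_R0. apply Rabs_pos.
      * apply loc_int with 1 (u + 1). lra. intros y Hy. apply s_ge1; lra.
    + apply (Hm u). lra.
Qed.
Lemma rat_IZR : forall k, is_rational (IZR k).
Proof. intro k. exists k, 1%Z. split. lia. unfold Rdiv. rewrite Rinv_1. ring. Qed.
Lemma rat_plus : forall x y, is_rational x -> is_rational y -> is_rational (x + y).
Proof.
  intros x y [a [b [Hb ->]]] [c [d [Hd ->]]].
  exists (a * d + c * b)%Z, (b * d)%Z. split. lia.
  rewrite plus_IZR, !mult_IZR. field. split; apply not_0_IZR; auto.
Qed.

Lemma rat_between : forall x y, x < y -> exists r, is_rational r /\ x < r < y.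
Proof.
  intros x y Hxy.
  destruct (archimed (/(y - x))) as [Q1 Q2].
  set (q := up (/(y - x))) in *.
  assert (Hyx : 0 < /(y-x)) by (apply Rinv_0_lt_compat; lra).
  assert (Hq : 0 < IZR q) by lra.
  destruct (archimed (x * IZR q)) as [M1 M2].
  set (m := up (x * IZR q)) in *.
  exists (IZR m / IZR q). split.
  - exists m, q. split; auto. intro E; rewrite E in Hq; lra.
  - split.
    + apply Rmult_lt_reg_r with (IZR q); auto. unfold Rdiv; rewrite Rmult_assoc, Rinv_l; lra.
    + apply Rmult_lt_reg_r with (IZR q); auto. unfold Rdiv; rewrite Rmult_assoc, Rinv_l by lra.
      rewrite Rmult_1_r.
      assert (1 < (y - x) * IZR q).
      { apply Rmult_lt_compat_l with (r := y - x) in Q1; [|lra].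
        rewrite Rinv_r in Q1 by lra. lra. }
      nra.
Qed.

Definition seqZ (c : nat -> R) (k : Z) : R :=
  if (k <=? 0)%Z then c 0%nat + IZR k else c (Z.to_nat k).

Lemma seqZ_neg : forall c k, (k <= 0)%Z -> seqZ c k = c 0%nat + IZR k.
Proof. intros c k H. unfold seqZ. destruct (Z.leb_spec k 0); [auto | lia]. Qed.
Lemma seqZ_pos : forall c (n : nat), seqZ c (Z.of_nat n) = c n.
Proof.
  intros c n. unfold seqZ. destruct (Z.leb_spec (Z.of_nat n) 0).
  - assert (n = 0%nat) by lia. subst. simpl. ring.
  - rewrite Nat2Z.id. auto.
Qed.

Lemma seqZ_rat : forall c, (forall n, is_rational (c n)) -> forall k, is_rational (seqZ c k).
Proof.
  intros c H k. unfold seqZ. destruct (k <=? 0)%Z. apply rat_plus; auto; apply rat_IZR. auto.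
Qed.

Lemma seqZ_inc : forall c, (forall n, c n < c (S n)) -> forall k, seqZ c k < seqZ c (k + 1)%Z.
Proof.
  intros c H k. destruct (Z_lt_le_dec k 0).
  - rewrite !seqZ_neg by lia. rewrite plus_IZR. simpl. lra.
  - replace k with (Z.of_nat (Z.to_nat k)) by lia.
    replace (Z.of_nat (Z.to_nat k) + 1)%Z with (Z.of_nat (S (Z.to_nat k))) by lia.
    rewrite !seqZ_pos. auto.
Qed.

Lemma inc_mono : forall a : Z -> R, (forall k, a k < a (k+1)%Z) -> forall i j, (i <= j)%Z -> a i <= a j.
Proof.
  intros a H i j Hij.
  replace j with (i + Z.of_nat (Z.to_nat (j - i)))%Z by lia.
  generalize (Z.to_nat (j - i)). intro n. induction n.
  - simpl. rewrite Z.add_0_r. lra.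
  - replace (i + Z.of_nat (S n))%Z with ((i + Z.of_nat n) + 1)%Z by lia.
    specialize (H (i + Z.of_nat n)%Z). lra.
Qed.

Lemma inc_strict : forall a : Z -> R, (forall k, a k < a (k+1)%Z) -> forall i j, (i < j)%Z -> a i < a j.
Proof.
  intros a H i j Hij. apply Rlt_le_trans with (a (i+1)%Z). auto. apply inc_mono; auto. lia.
Qed.

Lemma inc_index : forall a : Z -> R, (forall k, a k < a (k+1)%Z) -> forall x i j,
  a i <= x -> x < a j -> exists k, a k <= x < a (k+1)%Z.
Proof.
  intros a H x i j Hi Hj.
  assert (Hij : (i < j)%Z).
  { destruct (Z_lt_le_dec i j); auto. assert (a j <= a i) by (apply inc_mono; auto). lra. }
  replace j with (i + Z.of_nat (Z.to_nat (j - i)))%Z in Hj by lia.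
  remember (Z.to_nat (j - i)) as n eqn:En. clear En Hij j.
  revert i Hi Hj. induction n; intros i Hi Hj.
  - simpl in Hj. rewrite Z.add_0_r in Hj. lra.
  - destruct (Rlt_dec x (a (i+1)%Z)).
    + exists i. auto.
    + apply (IHn (i+1)%Z). lra. replace (i + 1 + Z.of_nat n)%Z with (i + Z.of_nat (S n))%Z by lia. auto.
Qed.

Lemma seqZ_index : forall c L, (forall n, c n < c (S n)) -> (forall x, x < L -> exists n, x < c n) ->
  forall x, x < L -> exists k, seqZ c k <= x < seqZ c (k+1)%Z.
Proof.
  intros c L Hc HL x Hx.
  destruct (HL x Hx) as [n Hn].
  destruct (Rle_dec (c 0%nat) x).
  - apply inc_index with (j := Z.of_nat n) (i := 0%Z).
    + apply seqZ_inc; auto.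
    + rewrite seqZ_neg by lia. simpl. lra.
    + rewrite seqZ_pos. auto.
  - apply inc_index with (j := Z.of_nat n) (i := (- up (c 0%nat - x))%Z).
    + apply seqZ_inc; auto.
    + destruct (archimed (c 0%nat - x)). assert (0 < IZR (up (c 0%nat - x))) by lra. apply lt_0_IZR in H1.
      rewrite seqZ_neg by lia. rewrite opp_IZR. lra.
    + rewrite seqZ_pos. auto.
Qed.
Definition gseq (L : R) (d : nat -> R) (n : nat) : R :=
  epsilon (inhabits 0) (fun r => is_rational r /\ L - d n < r < L - d n / 2).

Lemma gseq_spec : forall L d n, 0 < d n -> is_rational (gseq L d n) /\ L - d n < gseq L d n < L - d n / 2.
Proof.
  intros L d n H. unfold gseq. apply epsilon_spec.
  apply rat_between. lra.
Qed.

Lemma gseq_inc : forall L d, (forall n, 0 < d n) -> (forall n, d (S n) <= d n / 4) ->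
  forall n, gseq L d n < gseq L d (S n).
Proof.
  intros L d H1 H2 n. destruct (gseq_spec L d n (H1 n)) as [_ [A B]].
  destruct (gseq_spec L d (S n) (H1 (S n))) as [_ [C D]]. specialize (H2 n). specialize (H1 n). lra.
Qed.

Lemma gseq_lim : forall L d, (forall n, 0 < d n) -> (forall e, 0 < e -> exists n, d n < e) ->
  forall x, x < L -> exists n, x < gseq L d n.
Proof.
  intros L d H1 H2 x Hx. destruct (H2 (L - x)) as [n Hn]. lra.
  exists n. destruct (gseq_spec L d n (H1 n)) as [_ [A B]]. lra.
Qed.

Definition da (n : nat) : R := (/4)^n.
Definition db (n : nat) : R := (/4)^(n*n).

Lemma da_pos : forall n, 0 < da n.
Proof. intro; unfold da; apply pow_lt; lra. Qed.
Lemma db_pos : forall n, 0 < db n.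
Proof. intro; unfold db; apply pow_lt; lra. Qed.
Lemma da_S : forall n, da (S n) <= da n / 4.
Proof. intro; unfold da; apply Req_le; simpl; field. Qed.

Lemma pow4_le : forall m n, (m <= n)%nat -> (/4)^n <= (/4)^m.
Proof.
  intros m n H. induction H. lra. simpl.
  assert (0 <= (/4)^m0) by (apply pow_le; lra). lra.
Qed.

Lemma db_S : forall n, db (S n) <= db n / 4.
Proof.
  intro; unfold db. replace (S n * S n)%nat with (S (n * n + 2 * n))%nat by lia.
  change ((/4)^(S (n*n+2*n))) with (/4 * (/4)^(n*n+2*n)).
  unfold Rdiv; rewrite (Rmult_comm _ (/4)); apply Rmult_le_compat_l. lra. apply pow4_le; lia.
Qed.

Lemma da_small : forall e, 0 < e -> exists n, da n < e.
Proof.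
  intros e He. destruct (pow_lt_1_zero (/4) ltac:(rewrite Rabs_right; lra) e He) as [N HN].
  exists N. specialize (HN N (le_n N)). unfold da. rewrite Rabs_right in HN; auto.
  apply Rle_ge, pow_le; lra.
Qed.
Lemma db_small : forall e, 0 < e -> exists n, db n < e.
Proof.
  intros e He. destruct (da_small e He) as [n Hn]. exists n. unfold db, da in *.
  apply Rle_lt_trans with ((/4)^n); auto. apply pow4_le. nia.
Qed.
Definition piece (a b : Z -> R) (k : Z) (x : R) : R := sAB (a k) (b k) (a (k+1)%Z) (b (k+1)%Z) x.

Lemma sAB_left : forall p1 q1 p2 q2 x, p1 < p2 -> x <= p1 -> sAB p1 q1 p2 q2 x = q1.
Proof.
  intros. unfold sAB. rewrite s_le0. ring. unfold Rdiv. apply Rmult_le_0_r. lra.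
  apply Rlt_le, Rinv_0_lt_compat; lra.
Qed.
Lemma sAB_right : forall p1 q1 p2 q2 x, p1 < p2 -> p2 <= x -> sAB p1 q1 p2 q2 x = q2.
Proof.
  intros. unfold sAB. rewrite s_ge1. ring.
  apply Rmult_le_reg_r with (p2 - p1). lra. unfold Rdiv. rewrite Rmult_assoc, Rinv_l; lra.
Qed.
Lemma sAB_strict : forall p1 q1 p2 q2 x y, p1 < p2 -> q1 < q2 -> p1 <= x -> x < y -> y <= p2 ->
  sAB p1 q1 p2 q2 x < sAB p1 q1 p2 q2 y.
Proof.
  intros. unfold sAB. apply Rplus_lt_compat_r. apply Rmult_lt_compat_l. lra.
  assert (0 < /(p2 - p1)) by (apply Rinv_0_lt_compat; lra).
  apply s_strict; unfold Rdiv.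
  apply Rmult_le_pos; lra. apply Rmult_lt_compat_r; lra.
  apply Rmult_le_reg_r with (p2 - p1). lra. rewrite Rmult_assoc, Rinv_l; lra.
Qed.
Lemma sAB_mono : forall p1 q1 p2 q2 x y, p1 < p2 -> q1 <= q2 -> x <= y ->
  sAB p1 q1 p2 q2 x <= sAB p1 q1 p2 q2 y.
Proof.
  intros. unfold sAB. apply Rplus_le_compat_r. apply Rmult_le_compat_l. lra.
  assert (0 < /(p2 - p1)) by (apply Rinv_0_lt_compat; lra).
  apply s_mono; unfold Rdiv. apply Rmult_le_compat_r; lra.
Qed.
Lemma sAB_range : forall p1 q1 p2 q2 x, p1 < p2 -> q1 <= q2 -> q1 <= sAB p1 q1 p2 q2 x <= q2.
Proof.
  intros. unfold sAB. destruct (s_range ((x - p1) / (p2 - p1))). split; nra.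
Qed.

Definition Kidx (a : Z -> R) (x : R) : Z := epsilon (inhabits 0%Z) (fun k => a k <= x < a (k+1)%Z).

Definition incZ (a : Z -> R) := forall k, a k < a (k+1)%Z.

Lemma Kidx_spec : forall a x, (exists k, a k <= x < a (k+1)%Z) -> a (Kidx a x) <= x < a (Kidx a x + 1)%Z.
Proof. intros a x H. unfold Kidx. apply epsilon_spec with (P := fun k => a k <= x < a (k+1)%Z). auto. Qed.

Lemma Kidx_cases : forall a x k, incZ a -> a k <= x <= a (k+1)%Z ->
  Kidx a x = k \/ (Kidx a x = (k+1)%Z /\ x = a (k+1)%Z).
Proof.
  intros a x k Ha Hk.
  assert (Hex : exists k, a k <= x < a (k+1)%Z).
  { destruct (Rlt_dec x (a (k+1)%Z)). exists k; lra. exists (k+1)%Z. split. lra.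
    specialize (Ha (k+1)%Z). lra. }
  destruct (Kidx_spec a x Hex) as [K1 K2].
  set (K := Kidx a x) in *.
  destruct (Z_lt_le_dec K k).
  - assert (a (K+1)%Z <= a k) by (apply inc_mono; auto; lia). lra.
  - destruct (Z_le_lt_eq_dec k K l).
    + destruct (Z_lt_le_dec (k+1) K).
      * assert (a (k+1)%Z < a K) by (apply inc_strict; auto). lra.
      * right. assert (K = (k+1)%Z) by lia. split; auto. rewrite H in K1. lra.
    + left; auto.
Qed.
Definition Aw (w : R) : Z -> R := seqZ (gseq w da).
Definition Bz (z : R) : Z -> R := seqZ (gseq z db).

Lemma Aw_inc : forall w, incZ (Aw w).
Proof. intros w k. apply seqZ_inc. apply gseq_inc. apply da_pos. apply da_S. Qed.
Lemma Bz_inc : forall z, incZ (Bz z).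
Proof. intros z k. apply seqZ_inc. apply gseq_inc. apply db_pos. apply db_S. Qed.

Lemma seqZ_lt : forall L d, (forall n, 0 < d n) -> forall k, seqZ (gseq L d) k < L.
Proof.
  intros L d H k. destruct (Z_lt_le_dec 0 k).
  - replace k with (Z.of_nat (Z.to_nat k)) by lia. rewrite seqZ_pos.
    destruct (gseq_spec L d (Z.to_nat k) (H _)) as [_ [A B]]. specialize (H (Z.to_nat k)). lra.
  - rewrite seqZ_neg by auto. destruct (gseq_spec L d 0 (H _)) as [_ [A B]].
    specialize (H 0%nat). assert (IZR k <= 0) by (apply IZR_le; auto). lra.
Qed.
Lemma Aw_lt : forall w k, Aw w k < w.
Proof. intros; apply seqZ_lt, da_pos. Qed.
Lemma Bz_lt : forall z k, Bz z k < z.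
Proof. intros; apply seqZ_lt, db_pos. Qed.

Lemma Aw_index : forall w x, x < w -> exists k, Aw w k <= x < Aw w (k+1)%Z.
Proof.
  intros. apply seqZ_index with w; auto. apply gseq_inc. apply da_pos. apply da_S.
  apply gseq_lim. apply da_pos. apply da_small.
Qed.
Lemma Bz_index : forall z x, x < z -> exists k, Bz z k <= x < Bz z (k+1)%Z.
Proof.
  intros. apply seqZ_index with z; auto. apply gseq_inc. apply db_pos. apply db_S.
  apply gseq_lim. apply db_pos. apply db_small.
Qed.
Lemma Aw_rat : forall w k, is_rational (Aw w k).
Proof. intros. apply seqZ_rat. intro n. apply (gseq_spec w da n (da_pos n)). Qed.
Lemma Bz_rat : forall z k, is_rational (Bz z k).
Proof. intros. apply seqZ_rat. intro n. apply (gseq_spec z db n (db_pos n)). Qed.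

Definition Pf (y : R) : R := y * h y.

Definition tfun (w z : R) (x : R) : R :=
  if Rlt_dec x w then piece (Aw w) (Bz z) (Kidx (Aw w) x) x else z + Pf (x - w).

Lemma t_piece : forall w z x k, x < w -> Aw w k <= x <= Aw w (k+1)%Z ->
  tfun w z x = piece (Aw w) (Bz z) k x.
Proof.
  intros w z x k Hx Hk. unfold tfun. destruct (Rlt_dec x w); [|lra].
  destruct (Kidx_cases (Aw w) x k (Aw_inc w) Hk) as [E0 | [E1 E2]]; [rewrite E0; auto | rewrite E1].
  unfold piece. rewrite sAB_left. rewrite sAB_right. auto.
  apply Aw_inc. lra. replace (k+1+1)%Z with ((k+1)+1)%Z by lia. apply Aw_inc. lra.
Qed.

Lemma t_right : forall w z x, w <= x -> tfun w z x = z + Pf (x - w).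
Proof. intros. unfold tfun. destruct (Rlt_dec x w); [lra | auto]. Qed.

Lemma t_w : forall w z, tfun w z w = z.
Proof. intros. rewrite t_right by lra. unfold Pf. replace (w - w) with 0 by ring. ring. Qed.
Lemma Pf_zero : forall y, y <= 0 -> Pf y = 0.
Proof. intros. unfold Pf. rewrite h_zero; auto; ring. Qed.
Lemma Pf_nonneg : forall y, 0 <= y -> 0 <= Pf y.
Proof. intros. unfold Pf. apply Rmult_le_pos; auto. apply h_nonneg. Qed.
Lemma Pf_strict : forall u v, 0 <= u -> u < v -> Pf u < Pf v.
Proof.
  intros u v Hu Huv. unfold Pf. assert (h u < h v) by (apply h_strict; auto).
  assert (0 <= h u) by apply h_nonneg. nra.
Qed.
Lemma Pf_Sm : Sm Pf.
Proof. apply Sm_mult. apply Sm_id. apply h_Sm. Qed.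
Lemma Pf_big : forall r, 1 <= r -> r / 3 <= Pf r.
Proof.
  intros r Hr. unfold Pf. assert (h 1 <= h r) by (apply h_mono; auto).
  assert (1/3 <= h 1).
  { rewrite h_posv by lra. replace (-(1/1)) with (- (1)) by field. rewrite exp_Ropp.
    assert (A := exp_le_3). assert (0 < exp 1) by apply exp_pos.
    apply Rmult_le_reg_r with (exp 1); auto. unfold Rdiv. rewrite Rmult_assoc, Rinv_l; lra. }
  nra.
Qed.

Lemma piece_strict_aux : forall w z k x y, Aw w k <= x -> x < y -> y <= Aw w (k+1)%Z ->
  piece (Aw w) (Bz z) k x < piece (Aw w) (Bz z) k y.
Proof. intros. apply sAB_strict; auto. apply Aw_inc. apply Bz_inc. Qed.

Lemma t_left_range : forall w z x k, x < w -> Aw w k <= x < Aw w (k+1)%Z ->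
  Bz z k <= tfun w z x < Bz z (k+1)%Z.
Proof.
  intros w z x k Hx Hk. rewrite (t_piece w z x k) by lra. split.
  - apply sAB_range. apply Aw_inc. apply Rlt_le, Bz_inc.
  - replace (Bz z (k+1)%Z) with (piece (Aw w) (Bz z) k (Aw w (k+1)%Z)).
    apply piece_strict_aux; lra. unfold piece. apply sAB_right. apply Aw_inc. lra.
Qed.

Lemma t_strict : forall w z x y, x < y -> tfun w z x < tfun w z y.
Proof.
  intros w z x y Hxy.
  destruct (Rlt_dec x w) as [Hx | Hx].
  - destruct (Aw_index w x Hx) as [k Hk].
    destruct (Rlt_dec y w) as [Hy | Hy].
    + destruct (Aw_index w y Hy) as [m Hm].
      destruct (Z_lt_le_dec m k).
      * assert (Aw w (m+1)%Z <= Aw w k) by (apply inc_mono; [apply Aw_inc | lia]). lra.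
      * destruct (Z_le_lt_eq_dec k m l).
        -- assert (A1 := t_left_range w z x k Hx Hk). assert (A2 := t_left_range w z y m Hy Hm).
           assert (Bz z (k+1)%Z <= Bz z m) by (apply inc_mono; [apply Bz_inc | lia]). lra.
        -- subst m. rewrite (t_piece w z x k), (t_piece w z y k) by lra.
           apply piece_strict_aux; lra.
    + assert (A1 := t_left_range w z x k Hx Hk). assert (Bz z (k+1)%Z < z) by apply Bz_lt.
      rewrite (t_right w z y) by lra. assert (0 <= Pf (y - w)) by (apply Pf_nonneg; lra). lra.
  - rewrite !t_right by lra. assert (Pf (x - w) < Pf (y - w)) by (apply Pf_strict; lra). lra.
Qed.

Lemma t_inj : forall w z x y, tfun w z x = tfun w z y -> x = y.
Proof.
  intros w z x y H. destruct (Rtotal_order x y) as [L | [L | L]]; auto.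
  - assert (A := t_strict w z x y L). lra.
  - assert (A := t_strict w z y x L). lra.
Qed.

Lemma t_surj : forall w z y, exists x, tfun w z x = y.
Proof.
  intros w z y. destruct (Rlt_dec y z) as [Hy | Hy].
  - destruct (Bz_index z y Hy) as [k Hk].
    assert (Hs : Sm (fun x => piece (Aw w) (Bz z) k x + - y)).
    { apply Sm_plus. apply sAB_Sm. apply Sm_const. }
    assert (Ha := Aw_inc w k).
    destruct (IVT_cor (fun x => piece (Aw w) (Bz z) k x + - y) (Aw w k) (Aw w (k+1)%Z)) as [x0 [H1 H2]].
    + intro x. apply (Sm_cont _ Hs 0 x).
    + lra.
    + unfold piece. rewrite sAB_left by lra. rewrite sAB_right by lra. nra.
    + exists x0. assert (Aw w (k+1)%Z < w) by apply Aw_lt.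
      rewrite (t_piece w z x0 k) by lra. lra.
  - assert (Hs : Sm (fun x => z + Pf (1 * x + - w) + - y)).
    { apply Sm_plus. apply Sm_plus. apply Sm_const. apply Sm_affine, Pf_Sm. apply Sm_const. }
    destruct (IVT_cor (fun x => z + Pf (1 * x + - w) + - y) w (w + 3 * (y - z) + 1)) as [x0 [H1 H2]].
    + intro x. apply (Sm_cont _ Hs 0 x).
    + lra.
    + replace (1 * w + - w) with 0 by ring. rewrite Pf_zero by lra.
      assert (A := Pf_big (3 * (y - z) + 1) ltac:(lra)).
      replace (1 * (w + 3 * (y - z) + 1) + - w) with (3 * (y - z) + 1) by ring. nra.
    + exists x0. rewrite t_right by lra. replace (1 * x0 + - w) with (x0 - w) in H2 by ring. lra.
Qed.

Lemma t_simF : forall w z x, x < w -> simF_star (tfun w z x) x.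
Proof.
  intros w z x Hx. destruct (Aw_index w x Hx) as [k Hk].
  apply simF_star_step with x; [| apply simF_star_refl].
  exists (Aw w k), (Bz z k), (Aw w (k+1)%Z), (Bz z (k+1)%Z).
  repeat split; try apply Aw_rat; try apply Bz_rat; try apply Aw_inc; try apply Bz_inc.
  right. split. lra. rewrite (t_piece w z x k) by lra. reflexivity.
Qed.
Lemma da_add : forall m n, da (m + n) = da m * da n.
Proof. intros; unfold da; apply pow_add. Qed.
Lemma da_mul : forall m n, da (m * n) = (da n) ^ m.
Proof. intros; unfold da. rewrite Nat.mul_comm. apply pow_mult. Qed.
Lemma da_le : forall m n, (m <= n)%nat -> da n <= da m.
Proof. intros; unfold da; apply pow4_le; auto. Qed.
Lemma db_da : forall j, db j = da (j * j).
Proof. reflexivity. Qed.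

Lemma tail : forall c C eps, 0 <= C -> 0 < eps -> exists N, forall j, (N <= j)%nat ->
  C * db j <= eps * da (c * S j).
Proof.
  intros c C eps HC He.
  destruct (da_small (eps / (C + 1))) as [n0 Hn0]. apply Rdiv_lt_0_compat; lra.
  exists (Nat.max (c + 2) n0). intros j Hj.
  assert (Hj1 : (c + 2 <= j)%nat) by lia. assert (Hj2 : (n0 <= j)%nat) by lia.
  rewrite db_da. replace (j * j)%nat with (c * S j + (j * j - c * S j))%nat by nia.
  rewrite da_add.
  assert (da (j * j - c * S j) <= da n0) by (apply da_le; nia).
  assert (0 < da (c * S j)) by apply da_pos.
  assert (0 < da (j * j - c * S j)) by apply da_pos.
  assert (C * da (j * j - c * S j) <= eps).
  { apply Rle_trans with (C * (eps / (C + 1))). apply Rmult_le_compat_l; lra.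
    assert (C / (C+1) <= 1).
    { apply Rmult_le_reg_r with (C+1); [lra|]. unfold Rdiv; rewrite Rmult_assoc, Rinv_l; lra. }
    replace (C * (eps/(C+1))) with (eps * (C/(C+1))) by (field; lra). nra. }
  nra.
Qed.

Definition Gk (w z : R) (k : Z) (u : R) : R :=
  piece (Aw w) (Bz z) (k - 1)%Z u + sAB (Aw w k) 0 (Aw w (k+1)%Z) (Bz z (k+1)%Z - Bz z k) u.

Lemma Gk_Sm : forall w z k, Sm (Gk w z k).
Proof. intros. apply Sm_plus; apply sAB_Sm. Qed.

Lemma t_loc_left : forall w z x k, x < w -> Aw w k <= x < Aw w (k+1)%Z ->
  locally x (fun u => tfun w z u = Gk w z k u).
Proof.
  intros w z x k Hx Hk.
  assert (Hk1 : Aw w (k - 1)%Z < Aw w k).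
  { replace k with ((k - 1) + 1)%Z at 2 by lia. apply Aw_inc. }
  assert (Hk2 := Aw_inc w k). assert (Hw := Aw_lt w (k+1)%Z).
  apply loc_int with (Aw w (k-1)%Z) (Aw w (k+1)%Z). lra.
  intros u Hu. unfold Gk. destruct (Rle_dec u (Aw w k)).
  - rewrite (t_piece w z u (k-1)%Z). rewrite sAB_left; auto. ring. lra.
    replace (k - 1 + 1)%Z with k by lia. lra.
  - rewrite (t_piece w z u k) by lra. unfold piece.
    replace (k - 1 + 1)%Z with k by lia. rewrite (sAB_right (Aw w (k-1)%Z) (Bz z (k-1)%Z) (Aw w k) (Bz z k) u) by lra.
    unfold sAB. ring.
Qed.

Lemma t_loc_right : forall w z x, w < x -> locally x (fun u => tfun w z u = z + Pf (1 * u + - w)).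
Proof.
  intros w z x Hx. apply loc_int with w (x + 1). lra. intros u Hu.
  rewrite t_right by lra. f_equal. f_equal. ring.
Qed.

Lemma Q_Sm : forall w z, Sm (fun u => z + Pf (1 * u + - w)).
Proof. intros. apply Sm_plus. apply Sm_const. apply Sm_affine, Pf_Sm. Qed.

Lemma cont_left_zero : forall g c, continuity_pt g c -> (forall u, u < c -> g u = 0) -> g c = 0.
Proof.
  intros g c Hc H. destruct (Req_dec (g c) 0) as [E0|Hn]; auto. exfalso.
  assert (Hp : 0 < Rabs (g c)) by (apply Rabs_pos_lt; auto).
  destruct (Hc (Rabs (g c)) Hp) as [d [Hd Hdd]].
  specialize (Hdd (c - d/2)). simpl in Hdd. unfold R_dist in Hdd.
  rewrite H in Hdd by lra.
  assert (Rabs (0 - g c) < Rabs (g c)).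
  { apply Hdd. split. unfold D_x, no_cond. split; auto. lra.
    replace (c - d/2 - c) with (- (d/2)) by ring. rewrite Rabs_Ropp, Rabs_right; lra. }
  rewrite Rminus_0_l, Rabs_Ropp in H0. lra.
Qed.

Lemma Q_flat : forall w z m, Derive_n (fun u => z + Pf (1 * u + - w)) (S m) w = 0.
Proof.
  intros w z m. apply cont_left_zero. apply Sm_cont, Q_Sm.
  intros u Hu. rewrite (Derive_n_ext_loc _ (fun _ => z)).
  apply Derive_n_const.
  apply loc_int with (u - 1) w. lra. intros y Hy. rewrite Pf_zero. ring. lra.
Qed.
Lemma term_arith : forall (db X Db Da M D eps W : R) (p : nat),
  0 < X -> X < Da -> 0 <= Db <= db -> Rabs D <= M -> 4 * M * db <= eps * (X^p * X^2) ->
  X^2 <= 2 * W -> 0 < eps -> Rabs (Db * (/Da)^p * D) <= eps / 2 * W.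
Proof.
  intros db X Db Da M D eps W p HX HXD HDb HD HM HW He.
  assert (HM0 : 0 <= M) by (apply Rle_trans with (Rabs D); auto; apply Rabs_pos).
  assert (Hi : 0 < /Da <= /X).
  { split. apply Rinv_0_lt_compat; lra. apply Rinv_le_contravar; lra. }
  assert (Hp : 0 < (/Da)^p) by (apply pow_lt; lra).
  assert (Hp2 : (/Da)^p <= (/X)^p) by (apply pow_incr; lra).
  assert (Hq : 0 < (/X)^p) by (apply pow_lt; apply Rinv_0_lt_compat; lra).
  assert (Hinv : (/X)^p * X^p = 1).
  { rewrite <- Rpow_mult_distr. rewrite Rinv_l by lra. apply pow1. }
  rewrite !Rabs_mult. rewrite (Rabs_right Db) by lra. rewrite (Rabs_right ((/Da)^p)) by lra.
  apply Rle_trans with (db * (/X)^p * M).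
  { apply Rmult_le_compat. nra. apply Rabs_pos. apply Rmult_le_compat; lra. auto. }
  assert (db * (/X)^p * M <= eps / 4 * X^2).
  { assert (4 * M * db * (/X)^p <= eps * (X^p * X^2) * (/X)^p) by (apply Rmult_le_compat_r; lra).
    replace (eps * (X^p * X^2) * (/X)^p) with (eps * X^2 * ((/X)^p * X^p)) in H by ring.
    rewrite Hinv in H. lra. }
  assert (eps / 4 * X^2 <= eps / 2 * W) by nra.
  lra.
Qed.

Definition alf (w : R) (j : nat) := gseq w da j.
Definition bet (z : R) (j : nat) := gseq z db j.

Lemma alf_gap : forall w j, da (S j) < alf w (S j) - alf w j.
Proof.
  intros. unfold alf. destruct (gseq_spec w da j (da_pos j)) as [_ [A B]].
  destruct (gseq_spec w da (S j) (da_pos (S j))) as [_ [C D]].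
  assert (E1 := da_S j). assert (E2 := da_pos j). assert (da (S j) = da j / 4) by (unfold da; simpl; field).
  lra.
Qed.
Lemma alf_w : forall w j, da j / 2 < w - alf w j.
Proof. intros. unfold alf. destruct (gseq_spec w da j (da_pos j)) as [_ [A B]]. lra. Qed.
Lemma bet_z : forall z j, z - bet z j < db j.
Proof. intros. unfold bet. destruct (gseq_spec z db j (db_pos j)) as [_ [A B]]. lra. Qed.
Lemma bet_gap : forall z j, 0 < bet z (S j) - bet z j < db j.
Proof.
  intros. unfold bet. assert (H := gseq_inc z db db_pos db_S j).
  destruct (gseq_spec z db (S j) (db_pos (S j))) as [_ [A B]]. assert (C := bet_z z j). unfold bet in C.
  assert (0 < db (S j)) by apply db_pos. lra.
Qed.
Lemma Aw_nat : forall w j, Aw w (Z.of_nat j) = alf w j.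
Proof. intros. unfold Aw. rewrite seqZ_pos. reflexivity. Qed.
Lemma Bz_nat : forall z j, Bz z (Z.of_nat j) = bet z j.
Proof. intros. unfold Bz. rewrite seqZ_pos. reflexivity. Qed.

Lemma idx_large : forall w N y, alf w N < y -> y < w -> exists j, (N <= j)%nat /\
  alf w j <= y < alf w (S j).
Proof.
  intros w N y H1 H2. destruct (Aw_index w y H2) as [k Hk].
  destruct (Z_lt_le_dec k (Z.of_nat N)).
  - assert (Aw w (k+1)%Z <= Aw w (Z.of_nat N)) by (apply inc_mono; [apply Aw_inc | lia]).
    rewrite Aw_nat in H. lra.
  - exists (Z.to_nat k). split. lia.
    replace k with (Z.of_nat (Z.to_nat k)) in Hk by lia.
    replace (Z.of_nat (Z.to_nat k) + 1)%Z with (Z.of_nat (S (Z.to_nat k))) in Hk by lia.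
    rewrite !Aw_nat in Hk. auto.
Qed.
Lemma Derive_n_piece : forall a b k n x,
  Derive_n (piece a b k) (S n) x =
  (b (k+1)%Z - b k) * (/(a (k+1)%Z - a k))^(S n) * Derive_n s (S n) ((x - a k)/(a (k+1)%Z - a k)).
Proof. intros. unfold piece. apply Derive_n_sAB. Qed.

Lemma da_sq : forall j, da j ^ 2 = da (2 * j).
Proof. intros. rewrite da_mul. reflexivity. Qed.

Lemma left_bound : forall w z m eps, 0 < eps -> exists d, 0 < d /\ forall y, w - d < y < w ->
  Rabs (Derive_n (tfun w z) m y - match m with O => z | S _ => 0 end) <= eps * (w - y).
Proof.
  intros w z m eps He. destruct m as [|m].
  - destruct (tail 2 2 eps ltac:(lra) He) as [N HN].
    exists (w - alf w (S N)). split. assert (H := alf_w w (S N)). assert (H' := da_pos (S N)). lra.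
    intros y Hy. destruct (idx_large w (S N) y ltac:(lra) ltac:(lra)) as [j [Hj Hyj]].
    simpl. assert (Hr := t_left_range w z y (Z.of_nat j) ltac:(lra)).
    replace (Z.of_nat j + 1)%Z with (Z.of_nat (S j)) in Hr by lia.
    rewrite !Aw_nat, !Bz_nat in Hr. specialize (Hr Hyj).
    assert (B1 := Bz_lt z (Z.of_nat (S j))). rewrite Bz_nat in B1.
    assert (B2 := bet_z z j). specialize (HN j ltac:(lia)).
    assert (B3 := alf_w w (S j)).
    assert (B4 : da (2 * S j) <= da (S j)) by (apply da_le; lia).
    rewrite Rabs_left1 by lra. nra.
  - destruct (s_der_bound m) as [M HM].
    assert (HM0 : 0 <= M) by (apply Rle_trans with (Rabs (Derive_n s (S m) 0)); auto; apply Rabs_pos).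
    destruct (tail (m + 3) (4 * M) eps ltac:(lra) He) as [N HN].
    exists (w - alf w (S N)). split. assert (H := alf_w w (S N)). assert (H' := da_pos (S N)). lra.
    intros y Hy. destruct (idx_large w (S N) y ltac:(lra) ltac:(lra)) as [j [Hj Hyj]].
    destruct j as [|n]. lia.
    set (k := Z.of_nat (S n)).
    assert (Hk : Aw w k <= y < Aw w (k+1)%Z).
    { unfold k. replace (Z.of_nat (S n) + 1)%Z with (Z.of_nat (S (S n))) by lia. rewrite !Aw_nat. auto. }
    rewrite (Derive_n_ext_loc _ (Gk w z k) _ _ (t_loc_left w z y k ltac:(lra) Hk)).
    unfold Gk. rewrite Derive_n_plus_Sm by (apply sAB_Sm).
    rewrite Derive_n_piece, Derive_n_sAB.
    replace (k - 1 + 1)%Z with k by lia.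
    replace (k - 1)%Z with (Z.of_nat n) by (unfold k; lia).
    unfold k. replace (Z.of_nat (S n) + 1)%Z with (Z.of_nat (S (S n))) by lia.
    rewrite !Aw_nat, !Bz_nat.
    rewrite Rminus_0_r, Rminus_0_r.
    assert (W1 := alf_w w (S (S n))).
    assert (HW : w - alf w (S (S n)) < w - y) by lra.
    eapply Rle_trans. apply Rabs_triang.
    replace (eps * (w - y)) with (eps / 2 * (w - y) + eps / 2 * (w - y)) by field.
    apply Rplus_le_compat.
    + apply term_arith with (db := db n) (X := da (S n)) (M := M); auto.
      * apply da_pos.
      * apply alf_gap.
      * assert (G := bet_gap z n). lra.
      * specialize (HN n ltac:(lia)). replace ((m + 3) * S n)%nat with (S m * S n + 2 * S n)%nat in HN by lia.
        rewrite da_add, !da_mul in HN. auto.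
      * rewrite da_sq. assert (da (2 * S n) <= da (S (S n))) by (apply da_le; lia). lra.
    + apply term_arith with (db := db (S n)) (X := da (S (S n))) (M := M); auto.
      * apply da_pos.
      * apply alf_gap.
      * assert (G := bet_gap z (S n)). lra.
      * specialize (HN (S n) ltac:(lia)).
        replace ((m + 3) * S (S n))%nat with (S m * S (S n) + 2 * S (S n))%nat in HN by lia.
        rewrite da_add, !da_mul in HN. auto.
      * rewrite da_sq. assert (da (2 * S (S n)) <= da (S (S n))) by (apply da_le; lia). lra.
Qed.
Lemma t_at_w : forall w z m,
  Derive_n (tfun w z) m w = (match m with O => z | S _ => 0 end) /\
  derivable_pt_lim (Derive_n (tfun w z) m) w 0.
Proof.
  intros w z m.
  set (Q := fun u => z + Pf (1 * u + - w)).
  assert (HQ : Sm Q) by apply Q_Sm.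
  assert (HV : forall m, Derive_n (tfun w z) m w = (match m with O => z | S _ => 0 end) ->
     derivable_pt_lim (Derive_n (tfun w z) m) w 0).
  { intros p Hv.
    assert (HQv : Derive_n Q p w = (match p with O => z | S _ => 0 end)).
    { destruct p. simpl. unfold Q. replace (1 * w + - w) with 0 by ring. rewrite Pf_zero by lra. ring.
      apply Q_flat. }
    assert (HQd : derivable_pt_lim (Derive_n Q p) w 0).
    { apply is_derive_Reals. rewrite <- (Q_flat w z p). apply Derive_correct. apply Sm_ex_derive_n; auto. }
    intros eps He.
    destruct (HQd eps He) as [d1 Hd1].
    destruct (left_bound w z p (eps / 2) ltac:(lra)) as [d2 [Hd2 Hl]].
    assert (Hd : 0 < Rmin d1 d2) by (apply Rmin_pos; [apply cond_pos | auto]).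
    exists (mkposreal _ Hd). intros hh Hh0 Hh. change (Rabs hh < Rmin d1 d2) in Hh.
    assert (Hm1 := Rmin_l d1 d2). assert (Hm2 := Rmin_r d1 d2).
    destruct (Rle_dec hh 0).
    + assert (hh < 0) by lra. rewrite Hv.
      specialize (Hl (w + hh)). rewrite Rabs_left in Hh by lra.
      assert (A := Hl ltac:(lra)).
      replace ((Derive_n (tfun w z) p (w + hh) - match p with O => z | S _ => 0 end) / hh - 0) with
        (- (Derive_n (tfun w z) p (w + hh) - match p with O => z | S _ => 0 end) / (- hh)) by (field; lra).
      unfold Rdiv. rewrite Rabs_mult. rewrite Rabs_Ropp. rewrite (Rabs_right (/ - hh)).
      2: { apply Rle_ge, Rlt_le, Rinv_0_lt_compat; lra. }
      apply Rle_lt_trans with (eps / 2 * (w - (w + hh)) * / - hh).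
      apply Rmult_le_compat_r. apply Rlt_le, Rinv_0_lt_compat; lra. auto.
      replace (eps / 2 * (w - (w + hh)) * / - hh) with (eps / 2) by (field; lra). lra.
    + rewrite Hv, <- HQv.
      rewrite (Derive_n_ext_loc _ Q _ (w + hh)).
      apply Hd1; auto. apply Rlt_le_trans with (Rmin d1 d2); auto.
      apply t_loc_right. lra. }
  induction m.
  - assert (V : Derive_n (tfun w z) 0 w = z) by (simpl; apply t_w). split; auto.
  - assert (V : Derive_n (tfun w z) (S m) w = 0).
    { destruct IHm as [_ D]. simpl. apply is_derive_unique. apply is_derive_Reals. auto. }
    split; auto.
Qed.

Lemma t_smooth : forall w z, smooth (tfun w z).
Proof.
  intros w z. exists (Derive_n (tfun w z)). split. reflexivity.
  intros n x.
  assert (E : ex_derive (Derive_n (tfun w z) n) x -> derivable_pt_lim (Derive_n (tfun w z) n) x (Derive_n (tfun w z) (S n) x)).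
  { intro H. apply is_derive_Reals. apply Derive_correct. auto. }
  destruct (Rtotal_order x w) as [H | [H | H]].
  - apply E. destruct (Aw_index w x H) as [k Hk].
    apply loc_ex with (Gk w z k). apply Gk_Sm. apply t_loc_left; auto.
  - subst x. destruct (t_at_w w z n) as [_ D].
    destruct (t_at_w w z (S n)) as [V _]. rewrite V. auto.
  - apply E. apply loc_ex with (fun u => z + Pf (1 * u + - w)). apply Q_Sm. apply t_loc_right; auto.
Qed.

Theorem mainTheorem8 : forall w z : R,
  exists t : R -> R,
    smooth t /\
    (forall x y : R, x < y -> t x < t y) /\
    (forall x y : R, t x = t y -> x = y) /\
    (forall y : R, exists x : R, t x = y) /\
    t w = z /\
    (forall x : R, x < w -> simF_star (t x) x).
Proof.
  intros w z. exists (tfun w z). split. apply t_smooth.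
  split. apply t_strict. split. apply t_inj. split. apply t_surj. split. apply t_w. apply t_simF.
Qed.
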